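(* Consider the Gaussian mean estimation problem described in the context (with $\mu=0$), fix $i$, and let $\tilde G_i$ be as defined there. For any $\eta\ge0$ and any realization $Z_i^\pm=z_\pm=(z_-,z_+)\in\mathbb R^2$: if $|z_+|\ne|z_-|$, then $$\psi^{*-1}_{\tilde G_i|Z_i^\pm}(\eta,z_\pm)\le B_{z_\pm,n}(\eta):=|z_+^2-z_-^2|\sqrt{2\eta}+\frac{2\sigma^2(z_+-z_-)^2}{n|z_+^2-z_-^2|}\sqrt{2\eta}+\frac{4\max(z_+^2,z_-^2)}{n}$$ (so that $B_{z_\pm,n}(\eta)=|z_+^2-z_-^2|\sqrt{2\eta}+\Theta(1/n)$); and if $|z_+|=|z_-|$, then $$\psi^{*-1}_{\tilde G_i|Z_i^\pm}(\eta,z_\pm)\le4\sigma\sqrt{\frac{2\eta}{n}}\,|z_+|+\frac{4\max(z_+^2,z_-^2)}{n}.$$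
   Context: Gaussian mean estimation: $\mathcal Z=\mathcal W=\mathbb R$, data distribution $\xi=N(\mu,\sigma^2)$ with $\mu=0$ and $\sigma>0$, loss $\ell(w,z)=(w-z)^2$, and the algorithm outputs the average of its $n\ge2$ training samples. Supersample construction: $Z_j^-,Z_j^+$ ($j=1,\dots,n$) are $2n$ i.i.d. samples from $\xi$, $Z_j^\pm=(Z_j^-,Z_j^+)$; $R_1,\dots,R_n$ i.i.d. uniform on $\{-1,1\}$ independent of the samples; $W=\frac1n\sum_j Z_j^{R_j}$ with $Z_j^1=Z_j^+$, $Z_j^{-1}=Z_j^-$. Let $(\tilde W_i,\tilde R_i)$ be a decoupled pair of $(W,R_i)$ conditioned on $Z_i^\pm$: jointly defined with $Z_i^\pm$ so that $(\tilde W_i,Z_i^\pm)\overset{D}{=}(W,Z_i^\pm)$, $(\tilde R_i,Z_i^\pm)\overset{D}{=}(R_i,Z_i^\pm)$, and $\tilde W_i-Z_i^\pm-\tilde R_i$ is a Markov chain; and $\tilde G_i=\tilde R_i(\ell(\tilde W_i,Z_i^-)-\ell(\tilde W_i,Z_i^+))$. For random $F,U$: $\psi_{F|U}(\lambda,u)=\ln\mathbb E[e^{\lambda(F-\mathbb E[F|U=u])}\mid U=u]$ and $\psi^{*-1}_{F|U}(\eta,u)=\inf_{\lambda>0}\frac{\eta+\psi_{F|U}(\lambda,u)}{\lambda}$. *)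

(* Defs.v *)
From HB Require Import structures.
From mathcomp Require Import all_boot all_order all_algebra.
From mathcomp Require Import all_classical all_reals all_analysis.
Set Implicit Arguments. Unset Strict Implicit. Unset Printing Implicit Defensive.
Import Order.TTheory GRing.Theory Num.Theory.
Local Open Scope classical_set_scope.
Local Open Scope ring_scope.

Section Gauss.
Context {R : realType}.

Definition loss (w z : R) : R := (w - z) ^+ 2.

(* Z_j^{r} for r in {-1,1} (encoded as a real sign): Z^1 = Z^+, Z^{-1} = Z^- *)
Definition zsel (zm zp r : R) : R := if r == 1 then zp else zm.

(* Conditional law given Z_i^pm = (zm,zp), data distribution N(0,sigma^2):
   W = (1/n)( Z_i^{R_i} + S ) where S = sum_{j<>i} Z_j^{R_j} ~ N(0,(n-1) sigma^2)
   (the Z_j^{R_j}, j<>i, are i.i.d. N(0,sigma^2) and independent of (Z_i^pm,R_i)),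
   R_i uniform on {-1,1}.  The decoupled pair (W~,R~) has W~ with this law and
   R~ uniform on {-1,1}, conditionally independent given Z_i^pm.
   condE n sigma zm zp f = E[ f(R~, W~) | Z_i^pm = (zm,zp) ]. *)
Definition Wval (n : nat) (zm zp r s : R) : R := (zsel zm zp r + s) / n%:R.

Definition condE (n : nat) (sigma zm zp : R) (f : R -> R -> R) : R :=
  (2^-1) * \sum_(rt <- [:: -1; 1])
    ((2^-1) * \sum_(r <- [:: -1; 1])
       (\int[normal_prob 0 (sigma * Num.sqrt (n.-1)%:R)]_(s in [set: R])
           f rt (Wval n zm zp r s))).

Definition Gtil (zm zp rt w : R) : R := rt * (loss w zm - loss w zp).

Definition psiG (n : nat) (sigma zm zp lam : R) : R :=
  let m := condE n sigma zm zp (fun rt w => Gtil zm zp rt w) in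
  ln (condE n sigma zm zp (fun rt w => expR (lam * (Gtil zm zp rt w - m)))).

Definition psi_star_inv (n : nat) (sigma zm zp eta : R) : \bar R :=
  ereal_inf [set ((eta + psiG n sigma zm zp lam) / lam)%:E | lam in [set l : R | 0 < l]].

End Gauss.

(* Main.v *)
Require Import Defs.
From HB Require Import structures.
From mathcomp Require Import all_boot all_order all_algebra.
From mathcomp Require Import all_classical all_reals all_analysis.
From mathcomp Require Import measurable_realfun lebesgue_integral_theory.lebesgue_Rintegral normal_distribution.
From mathcomp Require Import ring lra.
Import Order.TTheory GRing.Theory Num.Theory.
Local Open Scope classical_set_scope.
Local Open Scope ring_scope.

Section H.
Context {R : realType}.

Lemma int_normal (m s : R) (f : R -> \bar R) :
  (forall x, (0 <= f x)%E) -> measurable_fun setT f ->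
  (\int[normal_prob m s]_x f x = \int[lebesgue_measure]_x (f x * (normal_pdf m s x)%:E))%E.
Proof.
move=> f0 mf.
have dom := normal_prob_dominates m s.
rewrite -(Radon_Nikodym_SigmaFinite.change_of_variables dom) //.
apply: ae_eq_integral => //.
- apply: emeasurable_funM => //.
  exact: (measurable_int _ (Radon_Nikodym_SigmaFinite.f_integrable dom)).
- apply: emeasurable_funM => //.
  apply/measurable_EFinP; exact: measurable_normal_pdf.
- apply: ae_eqe_mul2l; apply: integral_ae_eq => //.
  + exact: (Radon_Nikodym_SigmaFinite.f_integrable dom).
  + apply/measurable_EFinP; exact: measurable_normal_pdf.
  + move=> E _ mE; rewrite -Radon_Nikodym_SigmaFinite.f_integral //.
Qed.

Lemma mgf (t a b : R) : t != 0 ->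
  \int[normal_prob 0 t]_(s in [set: R]) expR (a + b * s) = expR (a + b^+2 * t^+2 / 2).
Proof.
move=> t0; rewrite /Rintegral int_normal //; last first.
  apply/measurable_EFinP; apply: measurableT_comp => //.
  apply: measurable_funD => //; exact: measurable_funM.
have H x : ((expR (a + b * x))%:E * (normal_pdf 0 t x)%:E =
    (expR (a + b^+2 * t^+2 / 2))%:E * (normal_pdf (b * t^+2) t x)%:E)%E.
  rewrite -!EFinM; congr (_%:E).
  rewrite /normal_pdf (negbTE t0) /normal_fun.
  rewrite mulrCA -expRD mulrCA -expRD; congr (_ * expR _); rewrite -mulr_natr; field.
  done.
under eq_integral => x _ do rewrite H.
rewrite (ge0_integralZl _ measurableT).
- by rewrite integral_normal_pdf mule1.
- apply/measurable_EFinP; exact: measurable_normal_pdf.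
- by move=> x _; rewrite lee_fin normal_pdf_ge0.
- by rewrite lee_fin expR_ge0.
Qed.

Lemma fineBN (A B : \bar R) : fine (A - B)%E = - fine (B - A)%E.
Proof. by case: A B => [a| |] [b| |] //=; rewrite ?opprB ?oppr0. Qed.

Lemma RintN d (T : measurableType d) (mu : {measure set T -> \bar R}) (D : set T) (f : T -> R) :
  \int[mu]_(x in D) (- f x) = - \int[mu]_(x in D) f x.
Proof.
rewrite /Rintegral.
under eq_integral => x _ do rewrite EFinN.
rewrite integralE [in RHS]integralE.
rewrite (_ : (fun x => - (f x)%:E)%E = \- (fun x => (f x)%:E))%E //.
by rewrite funeposN funenegN fineBN.
Qed.
Lemma dEn (y : R) : is_derive y 1 (fun y => expR (- y)) (- expR (- y)).
Proof.
have := @is_derive1_comp R expR -%R y (expR (- y)) (-1) _ _.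
by rewrite mulrN1; apply.
Qed.

Definition En : R -> R := fun y => expR (- y).

Lemma G_ge0 (x : R) : 0 <= x -> 0 <= x * (expR x + expR (-x)) - (expR x - expR (-x)).
Proof.
move=> x0.
pose G : R -> R := (id * ((expR : R -> R) + En)) - ((expR : R -> R) - En).
have dG (y : R) : is_derive y (1:R) G (y * (expR y - expR (- y))).
  apply: is_derive_eq.
  rewrite /G /En /=.
  rewrite -[LHS]/(y * (expR y + expR (- y) * -1) + (expR y + expR (-y)) * 1 - (expR y - expR (- y) * -1)).
  ring.
have [|c] := MVT_segment x0 (fun y _ => dG y).
  apply: derivable_within_continuous => y _; exact: (@ex_derive _ _ _ _ _ _ _ (dG y)).
rewrite in_itv /= => /andP[c0 _].
move=> E.
suff -> : x * (expR x + expR (- x)) - (expR x - expR (- x)) = c * (expR c - expR (- c)) * (x - 0).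
  rewrite mulr_ge0 // ?subr0 // mulr_ge0 // subr_ge0 ler_expR; lra.
rewrite -E /G /En /=.
rewrite -[X in _ = X - _]/(x * (expR x + expR (- x)) - (expR x - expR (- x))).
rewrite -[X in _ = _ - X]/(0 * (expR 0 + expR (- 0)) - (expR 0 - expR (- 0))).
by rewrite oppr0 mul0r subrr subr0 subr0.
Qed.

Lemma cosh_le_pos (x : R) : 0 <= x -> expR x + expR (- x) <= 2 * expR (x ^+ 2 / 2).
Proof.
move=> x0.
pose h : R -> R := fun y => - (y ^+ 2 / 2).
pose F : R -> R := ((expR : R -> R) + En) * (expR \o h).
have dF (y : R) : is_derive y (1:R) F (- expR (h y) * (y * (expR y + expR (-y)) - (expR y - expR (- y)))).
  apply: is_derive_eq.
  rewrite /F /En /h /=.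
  rewrite -[LHS]/((expR y + expR (-y)) * (expR (- (y^+2/2)) * - (y^+2 * (- 2^-2 * 0) + 2^-1 * (y*1 + y*1))) + expR (- (y^+2/2)) * (expR y + expR (-y) * -1)).
  by field.
have [|c] := MVT_segment x0 (fun y _ => dF y).
  apply: derivable_within_continuous => y _; exact: (@ex_derive _ _ _ _ _ _ _ (dF y)).
rewrite in_itv /= => /andP[c0 _] E.
have : F x - F 0 <= 0.
  rewrite E subr0 mulr_le0_ge0 // mulNr oppr_le0 mulr_ge0 ?expR_ge0 //.
  exact: G_ge0.
rewrite subr_le0.
rewrite -[F x]/((expR x + expR (-x)) * expR (- (x^+2/2))).
rewrite -[F 0]/((expR 0 + expR (-0)) * expR (- (0^+2/2))).
rewrite oppr0 expr0n /= mul0r oppr0 expR0 mulr1 expRN.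
move=> H; have := ler_wpM2r (expR_ge0 (x^+2/2)) H; rewrite -mulrA -expRD addNr expR0 mulr1 => H2.
by rewrite (le_trans H2)...
Qed.

Lemma cosh_le (x : R) : expR x + expR (- x) <= 2 * expR (x ^+ 2 / 2).
Proof.
have [x0|x0] := leP 0 x; first exact: cosh_le_pos.
have := @cosh_le_pos (- x) ltac:(lra).
by rewrite opprK sqrrN addrC.
Qed.

Lemma RintN1 d (T : measurableType d) (mu : {measure set T -> \bar R}) (D : set T) (f : T -> R) :
  \int[mu]_(x in D) (-1 * f x) = - \int[mu]_(x in D) f x.
Proof.
rewrite -RintN; congr Rintegral; apply/funext => x; by rewrite mulN1r.
Qed.

Lemma Rint1 d (T : measurableType d) (mu : {measure set T -> \bar R}) (D : set T) (f : T -> R) :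
  \int[mu]_(x in D) (1 * f x) = \int[mu]_(x in D) f x.
Proof.
congr Rintegral; apply/funext => x; by rewrite mul1r.
Qed.

Lemma condE_G0 n (sigma zm zp : R) : condE n sigma zm zp (fun rt w => Gtil zm zp rt w) = 0.
Proof.
rewrite /condE !big_cons !big_nil /Gtil.
rewrite !RintN1 !Rint1.
ring.
Qed.

Lemma condE_exp n (sigma zm zp lam : R) : (2 <= n)%N -> 0 < sigma ->
  condE n sigma zm zp (fun rt w => expR (lam * (Gtil zm zp rt w - 0))) =
  expR (2 * lam ^+ 2 * (zp - zm) ^+ 2 * (sigma ^+ 2 * (n.-1)%:R) / n%:R ^+ 2) *
  (2^-1 * (2^-1 * (expR (- (lam * ((zp - zm) * (2 * zm / n%:R - (zm + zp)))))
                 + expR (- (lam * ((zp - zm) * (2 * zp / n%:R - (zm + zp))))))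
        + 2^-1 * (expR (lam * ((zp - zm) * (2 * zm / n%:R - (zm + zp))))
                 + expR (lam * ((zp - zm) * (2 * zp / n%:R - (zm + zp))))))).
Proof.
move=> n2 s0.
have nR0 : n%:R != 0 :> R by rewrite pnatr_eq0 -lt0n (leq_trans _ n2).
have n1 : (0 < n.-1)%N by case: n n2 nR0 => [|[|n]].
have t0 : sigma * Num.sqrt (n.-1)%:R != 0.
  by rewrite mulf_eq0 negb_or gt_eqF //= gt_eqF // sqrtr_gt0 ltr0n.
set K := (2 * lam ^+ 2 * _ * _ / _).
have H rt x : rt ^+ 2 = 1 ->
   \int[normal_prob 0 (sigma * Num.sqrt (n.-1)%:R)]_(s in [set: R])
      expR (lam * (Gtil zm zp rt (((x + s) / n%:R)) - 0)) =
   expR (rt * (lam * ((zp - zm) * (2 * x / n%:R - (zm + zp)))) + K).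
  move=> rt1.
  rewrite (_ : (fun s => _) = fun s => expR (rt * (lam * ((zp - zm) * (2 * x / n%:R - (zm + zp)))) +
        (2 * lam * rt * (zp - zm) / n%:R) * s)); last first.
    apply/funext => s; congr expR; rewrite /Gtil /loss; field; exact: nR0.
  rewrite mgf //; congr (expR (_ + _)).
  rewrite /K [(sigma * _) ^+ 2]exprMn sqr_sqrtr ?ler0n // !exprMn rt1.
  by field.
have zN : zsel zm zp (-1) = zm.
  rewrite /zsel; case: eqP => // h; exfalso; have : (-1 : R) < 1 by lra.
  by rewrite h ltxx.
have zP : zsel zm zp 1 = zp by rewrite /zsel eqxx.
rewrite /condE !big_cons !big_nil /Wval zN zP.
rewrite !H ?sqrrN ?expr1n //.
rewrite !mulN1r !mul1r !expRD.
ring.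
Qed.

Lemma pair_bound (lam p v L : R) : 0 <= lam -> v <= L -> - v <= L ->
  expR (- (lam * (- p + v))) + expR (lam * (- p + v)) <= 2 * expR (lam ^+ 2 * p ^+ 2 / 2 + lam * L).
Proof.
move=> l0 vL vL'.
apply: (@le_trans _ _ (expR (lam * L) * (expR (lam * p) + expR (- (lam * p))))).
  have h1 : lam * v <= lam * L by rewrite ler_wpM2l.
  have h2 : lam * (- v) <= lam * L by rewrite ler_wpM2l.
  rewrite [X in _ <= X]mulrDr -!expRD; apply: lerD; rewrite ler_expR !mulrDr !mulrN; rewrite mulrN in h2; lra.
rewrite mulrC expRD mulrA ler_wpM2r ?expR_ge0 //.
by rewrite (le_trans (cosh_le _)) // exprMn.
Qed.

Lemma psi_bound n (sigma zm zp lam : R) : (2 <= n)%N -> 0 < sigma -> 0 < lam ->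
  psiG n sigma zm zp lam <=
  lam ^+ 2 * ((zp ^+ 2 - zm ^+ 2) ^+ 2 / 2 + 2 * (zp - zm) ^+ 2 * (sigma ^+ 2 * (n.-1)%:R) / n%:R ^+ 2)
  + lam * (4 * Num.max (zp ^+ 2) (zm ^+ 2) / n%:R).
Proof.
move=> n2 s0 l0.
have nR0 : 0 < n%:R :> R by rewrite ltr0n (leq_trans _ n2).
rewrite /psiG condE_G0 condE_exp //.
set M := Num.max _ _.
have M1 : zp ^+ 2 <= M by rewrite le_max lexx.
have M2 : zm ^+ 2 <= M by rewrite le_max lexx orbT.
set L := 4 * M / n%:R.
set K := (2 * lam ^+ 2 * _ * _ / _).
have Hx x : (x = zm \/ x = zp) ->
   expR (- (lam * ((zp - zm) * (2 * x / n%:R - (zm + zp))))) +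
   expR (lam * ((zp - zm) * (2 * x / n%:R - (zm + zp))))
   <= 2 * expR (lam ^+ 2 * (zp ^+ 2 - zm ^+ 2) ^+ 2 / 2 + lam * L).
  move=> hx.
  rewrite (_ : (zp - zm) * (2 * x / n%:R - (zm + zp)) =
               - (zp ^+ 2 - zm ^+ 2) + 2 * (zp - zm) * x / n%:R); last first.
    by field; rewrite gt_eqF.
  apply: pair_bound; first exact: ltW.
    rewrite /L ler_pM2r ?invr_gt0 //; case: hx => ->; nra.
  rewrite /L -mulNr ler_pM2r ?invr_gt0 //; case: hx => ->; nra.
have HA := Hx zm (or_introl erefl).
have HB := Hx zp (or_intror erefl).
set V := (X in ln X).
have Vp : 0 < V by rewrite /V mulr_gt0 ?expR_gt0 // !(mulr_gt0, addr_gt0, expR_gt0, invr_gt0).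
rewrite -ler_expR lnK ?posrE //.
apply: (@le_trans _ _ (expR K * expR (lam ^+ 2 * (zp ^+ 2 - zm ^+ 2) ^+ 2 / 2 + lam * L))).
  rewrite /V ler_wpM2l ?expR_ge0 //; lra.
rewrite -expRD ler_expR /K le_eqVlt; apply/orP; left; apply/eqP. field; by rewrite gt_eqF.
Qed.

Lemma opt (eta B e : R) : 0 <= eta -> 0 <= B -> 0 < e ->
  exists2 lam, 0 < lam & eta / lam + lam * B <= 2 * Num.sqrt (eta * B) + e.
Proof.
move=> eta0 B0 e0.
have sq0 := sqrtr_ge0 (eta * B).
have [->|etap] := eqVneq eta 0.
  exists (e / (B + 1)); first by rewrite divr_gt0 //; lra.
  rewrite !mul0r sqrtr0 mulr0 !add0r mulrAC ler_pdivrMr; last lra.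
  nra.
have etap' : 0 < eta by rewrite lt_neqAle eq_sym etap.
have [->|Bp] := eqVneq B 0.
  exists (eta / e); first by rewrite divr_gt0.
  rewrite mulr0 addr0 invf_div.
  by rewrite mulrCA divff ?gt_eqF // mulr1 mulr0 sqrtr0 mulr0 add0r.
have Bp' : 0 < B by rewrite lt_neqAle eq_sym Bp.
set q := Num.sqrt (eta * B).
have qp : 0 < q by rewrite sqrtr_gt0 mulr_gt0.
have qq : q ^+ 2 = eta * B by rewrite sqr_sqrtr // mulr_ge0 // ltW.
exists (q / B); first by rewrite divr_gt0.
rewrite divfK ?gt_eqF // invf_div.
have -> : eta * (B / q) = q.
  by rewrite mulrA -qq; field; rewrite gt_eqF.
lra.
Qed.

Lemma star_bound n (sigma zm zp eta X : R) : (2 <= n)%N -> 0 < sigma -> 0 <= eta ->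
  2 * Num.sqrt (eta * ((zp ^+ 2 - zm ^+ 2) ^+ 2 / 2 + 2 * (zp - zm) ^+ 2 * (sigma ^+ 2 * (n.-1)%:R) / n%:R ^+ 2))
  + 4 * Num.max (zp ^+ 2) (zm ^+ 2) / n%:R <= X ->
  (psi_star_inv n sigma zm zp eta <= X%:E)%E.
Proof.
move=> n2 s0 eta0 hX.
set B := (_ / 2 + _) in hX. set L := 4 * _ / _ in hX.
have B0 : 0 <= B.
  exact: addr_ge0 (divr_ge0 (sqr_ge0 _) (ler0n _ 2)) (divr_ge0 (mulr_ge0 (mulr_ge0 (ler0n _ 2) (sqr_ge0 _)) (mulr_ge0 (sqr_ge0 _) (ler0n _ _))) (sqr_ge0 _)).
apply/lee_addgt0Pr => e e0.
have [lam l0 hl] := @opt eta B e eta0 B0 e0.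
apply: (@le_trans _ _ (((eta + psiG n sigma zm zp lam) / lam)%:E)).
  by apply: ereal_inf_lbound; exists lam.
rewrite -EFinD lee_fin.
have hp : psiG n sigma zm zp lam <= lam ^+ 2 * B + lam * L := @psi_bound n sigma zm zp lam n2 s0 l0.
have := ler_wpM2r (ltW l0) hl; rewrite mulrDl divfK ?gt_eqF // => hl'.
rewrite ler_pdivrMr //.
nra.
Qed.

Lemma sq_le (a b : R) : 0 <= a -> 0 <= b -> a ^+ 2 <= b ^+ 2 -> a <= b.
Proof. move=> a0 b0 h; nra. Qed.

Lemma sqr_norm (x : R) : `|x| ^+ 2 = x ^+ 2.
Proof. by rewrite -normrX ger0_norm // sqr_ge0. Qed.

Lemma kbound n : (2 <= n)%N -> (n.-1)%:R / n%:R ^+ 2 <= (n%:R : R)^-1.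
Proof.
move=> n2; have nR0 : 0 < n%:R :> R by rewrite ltr0n (leq_trans _ n2).
rewrite ler_pdivrMr ?exprn_gt0 // expr2 mulrA mulVf ?gt_eqF // mul1r.
by rewrite ler_nat leq_pred.
Qed.
End H.

Theorem lemma5 (R : realType) (n : nat) (sigma eta zm zp : R) :
  (2 <= n)%N -> 0 < sigma -> 0 <= eta ->
  (`|zp| != `|zm| ->
     (psi_star_inv n sigma zm zp eta <=
      (`|zp ^+ 2 - zm ^+ 2| * Num.sqrt (2 * eta)
       + 2 * sigma ^+ 2 * (zp - zm) ^+ 2 / (n%:R * `|zp ^+ 2 - zm ^+ 2|)
         * Num.sqrt (2 * eta)
       + 4 * Num.max (zp ^+ 2) (zm ^+ 2) / n%:R)%:E)%E) /\
  (`|zp| = `|zm| ->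
     (psi_star_inv n sigma zm zp eta <=
      (4 * sigma * Num.sqrt (2 * eta / n%:R) * `|zp|
       + 4 * Num.max (zp ^+ 2) (zm ^+ 2) / n%:R)%:E)%E).
Proof.
move=> n2 s0 eta0.
have nR0 : 0 < n%:R :> R by rewrite ltr0n (leq_trans _ n2).
have hk := @kbound R n n2.
have k0 : 0 <= (n.-1)%:R / n%:R ^+ 2 :> R by rewrite divr_ge0 ?ler0n ?sqr_ge0.
split => [hne|heq]; apply: star_bound => //; apply: lerD => //.
- set p := zp ^+ 2 - zm ^+ 2.
  have pa : 0 < `|p|.
    rewrite normr_gt0; apply/negP => /eqP hp; move/negP: hne; apply.
    have e2 : `|zp| ^+ 2 = `|zm| ^+ 2.
      by rewrite !sqr_norm; apply/eqP; rewrite -subr_eq0 -/p hp.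
    apply/eqP/le_anti/andP; split; apply: sq_le; rewrite ?normr_ge0 ?e2 //.
  set Q := 2 * sigma ^+ 2 * (zp - zm) ^+ 2 / n%:R.
  have Q0 : 0 <= Q by rewrite /Q divr_ge0 ?ler0n // mulr_ge0 ?sqr_ge0 // mulr_ge0 ?ler0n ?sqr_ge0.
  have -> : `|p| * Num.sqrt (2 * eta) + 2 * sigma ^+ 2 * (zp - zm) ^+ 2 / (n%:R * `|p|) * Num.sqrt (2 * eta)
      = Num.sqrt (2 * eta) * (`|p| + Q / `|p|).
    by rewrite /Q; field; rewrite !gt_eqF.
  set B := (X in eta * X).
  have hX : 2 * B <= (`|p| + Q / `|p|) ^+ 2.
    have -> : (`|p| + Q / `|p|) ^+ 2 = p ^+ 2 + 2 * Q + (Q / `|p|) ^+ 2.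
      by rewrite sqrrD sqr_norm; field; rewrite gt_eqF.
    have h2 : 4 * (zp - zm) ^+ 2 * sigma ^+ 2 * ((n.-1)%:R / n%:R ^+ 2) <= 4 * (zp - zm) ^+ 2 * sigma ^+ 2 * n%:R^-1.
      apply: ler_wpM2l hk; exact: mulr_ge0 (mulr_ge0 (ler0n _ 4) (sqr_ge0 _)) (sqr_ge0 _).
    have h1 := sqr_ge0 (Q / `|p|).
    rewrite /B /Q in h1 *.
    lra.
  have B0 : 0 <= B := addr_ge0 (divr_ge0 (sqr_ge0 _) (ler0n _ 2)) (divr_ge0 (mulr_ge0 (mulr_ge0 (ler0n _ 2) (sqr_ge0 _)) (mulr_ge0 (sqr_ge0 _) (ler0n _ _))) (sqr_ge0 _)).
  apply: sq_le.
  - by rewrite mulr_ge0 // sqrtr_ge0.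
  - by rewrite mulr_ge0 ?sqrtr_ge0 // addr_ge0 ?normr_ge0 // divr_ge0.
  rewrite !exprMn !sqr_sqrtr ?mulr_ge0 //.
  nra.
- have e2 : zp ^+ 2 = zm ^+ 2 by rewrite -sqr_norm heq sqr_norm.
  have hd : (zp - zm) ^+ 2 <= 4 * zp ^+ 2 by nra.
  have h := ler_pM (sqr_ge0 _) k0 hd hk.
  have h' := ler_wpM2l (_ : 0 <= 8 * eta * sigma ^+ 2) h.
  have h'' := h' (mulr_ge0 (mulr_ge0 (ler0n _ 8) eta0) (sqr_ge0 _)).
  apply: sq_le.
  - by rewrite mulr_ge0 // sqrtr_ge0.
  - by rewrite !mulr_ge0 ?sqrtr_ge0 ?normr_ge0 // ltW.
  rewrite !exprMn !sqr_sqrtr ?sqr_norm ?divr_ge0 ?mulr_ge0 ?ler0n //; last first.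
    exact: addr_ge0 (divr_ge0 (sqr_ge0 _) (ler0n _ 2)) (divr_ge0 (mulr_ge0 (mulr_ge0 (ler0n _ 2) (sqr_ge0 _)) (mulr_ge0 (sqr_ge0 _) (ler0n _ _))) (sqr_ge0 _)).
  rewrite e2 subrr.
  rewrite e2 in h''; lra.
Qed.
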